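(* Let $\mathcal{R}$ be a set of standard nominal rewrite rules and let $\mathcal{R}'$ be the CRS consisting of the rules $\mathcal{T}(\nabla,l)\Rightarrow\mathcal{T}(\nabla,r)$ for $\nabla\vdash l\to r$ in $\mathcal{R}$. If $\mathcal{R}'$ is terminating, then the nominal rewriting relation of $\mathcal{R}$ on ground nominal terms (in the empty freshness context) is terminating.
   Context: Nominal terms over signature $\Sigma$, atoms $\mathcal{A}$, variables $\mathcal{X}$: $s,t ::= a \mid \pi\cdot X \mid [a]s \mid f\,s \mid (s_1,\ldots,s_n)$ with $\pi$ finite-support permutations of atoms acting on terms in the usual nominal way; freshness contexts $\Delta$ are sets of constraints $a\#X$; freshness and $\alpha$-equivalence judgements are the standard nominal ones. Ground terms contain no variables. A term-in-context $\Delta\vdash t$ is closed if: (1) every atom occurrence $a$ is under an abstraction $[a]$; (2) if $\pi\cdot X$ is in the scope of an abstraction of $\pi(a)$ then every occurrence $\pi'\cdot X$ is in the scope of an abstraction of $\pi'(a)$, or $a\#X\in\Delta$; (3) for two occurrences $\pi_1\cdot X,\pi_2\cdot X$ and $a$ with $\pi_1(a)\neq\pi_2(a)$, if $a$ is not abstracted in one of the occurrences then $a\#X\in\Delta$. A standard nominal rule is a rule $\nabla\vdash l\to r$ (variables of $r$ and $\nabla$ among those of $l$) such that $\nabla\vdash(l,r)$ is closed and $l$ has the form $f\,s$. Nominal rewriting $s\to_R t$: $s=C[s']$, and there is a substitution $\theta$ (capture-permitting, $(\pi\cdot X)\theta=\pi\cdot(X\theta)$) with $\vdash a\#X\theta$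 for $a\#X\in\nabla$, $\vdash l\theta\approx_\alpha s'$, $\vdash C[r\theta]\approx_\alpha t$; rule sets are closed under permutations. CRSs: meta-terms $a\mid Z(t_1,\ldots,t_n)\mid[a]t\mid f\,t\mid(t_1,\ldots,t_n)$ modulo bound-variable renaming, rules $l\Rightarrow r$, valuations assigning substitutes $\underline{\lambda}(a_1,\dots,a_n).s$ to meta-variables, rewrite steps $C[\sigma(l)]\Rightarrow C[\sigma(r)]$ on terms. Translation: $\Lambda_t(X)$ is the set of atoms abstracted above some occurrence of $X$ in $t$; with a fixed total order on atoms, $\mathcal{T}(\Delta,t)$ replaces each $\pi\cdot X$ in $t$ by $X(\pi\cdot xs)$, where $xs$ is the ascending list of $\{\pi^{-1}(a)\mid a\in\Lambda_t(X)\}\setminus\{a\mid a\#X\in\Delta\}$, and leaves all other constructs unchanged (atoms become CRS variables, variables become meta-variables). *)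

(* Defs.v *)
From Stdlib Require Import List Arith Bool.
Import ListNotations.

Definition atom := nat.
Definition var := nat.
Definition fsym := nat.

Definition swap (a b c : atom) : atom :=
  if Nat.eqb c a then b else if Nat.eqb c b then a else c.

(* A finite-support permutation is a list of swappings;
   act [(a1,b1);...;(an,bn)] c = (a1 b1)((a2 b2)(...((an bn) c))).
   Composition is list concatenation, inverse is reversal. *)
Definition perm := list (atom * atom).

Definition act (p : perm) (c : atom) : atom :=
  fold_right (fun ab c => swap (fst ab) (snd ab) c) c p.

Definition perm_inv (p : perm) : perm := rev p.

Inductive term : Type :=
| Atom (a : atom)
| Susp (p : perm) (X : var)
| Abs (a : atom) (t : term)
| Fun (f : fsym) (t : term)
| Tup (ts : list term).

Fixpoint pact (p : perm) (t : term) : term :=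
  match t with
  | Atom a => Atom (act p a)
  | Susp q X => Susp (p ++ q) X
  | Abs a s => Abs (act p a) (pact p s)
  | Fun f s => Fun f (pact p s)
  | Tup ts => Tup (map (pact p) ts)
  end.

(* capture-permitting substitution, (pi.X)theta = pi.(X theta) *)
Fixpoint tsub (theta : var -> term) (t : term) : term :=
  match t with
  | Atom a => Atom a
  | Susp q X => pact q (theta X)
  | Abs a s => Abs a (tsub theta s)
  | Fun f s => Fun f (tsub theta s)
  | Tup ts => Tup (map (tsub theta) ts)
  end.

Fixpoint ground (t : term) : bool :=
  match t with
  | Atom _ => true
  | Susp _ _ => false
  | Abs _ s => ground s
  | Fun _ s => ground s
  | Tup ts => forallb ground ts
  end.

Fixpoint vars (t : term) : list var :=
  match t with
  | Atom _ => []
  | Susp _ X => [X]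
  | Abs _ s => vars s
  | Fun _ s => vars s
  | Tup ts => flat_map vars ts
  end.

(* Freshness contexts: lists of constraints a#X, written (a, X). *)
Definition fctx := list (atom * var).

Inductive fresh (D : fctx) (a : atom) : term -> Prop :=
| fr_atom b : a <> b -> fresh D a (Atom b)
| fr_susp p X : In (act (perm_inv p) a, X) D -> fresh D a (Susp p X)
| fr_abs_eq t : fresh D a (Abs a t)
| fr_abs b t : a <> b -> fresh D a t -> fresh D a (Abs b t)
| fr_fun f t : fresh D a t -> fresh D a (Fun f t)
| fr_tup ts : Forall (fresh D a) ts -> fresh D a (Tup ts).

Inductive aeq (D : fctx) : term -> term -> Prop :=
| ae_atom a : aeq D (Atom a) (Atom a)
| ae_susp p q X :
    (forall a, act p a <> act q a -> In (a, X) D) ->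
    aeq D (Susp p X) (Susp q X)
| ae_abs_eq a s t : aeq D s t -> aeq D (Abs a s) (Abs a t)
| ae_abs a b s t :
    a <> b -> aeq D s (pact [(a, b)] t) -> fresh D a t ->
    aeq D (Abs a s) (Abs b t)
| ae_fun f s t : aeq D s t -> aeq D (Fun f s) (Fun f t)
| ae_tup ss ts : Forall2 (aeq D) ss ts -> aeq D (Tup ss) (Tup ts).

Inductive ctx : Type :=
| Hole
| CAbs (a : atom) (C : ctx)
| CFun (f : fsym) (C : ctx)
| CTup (l1 : list term) (C : ctx) (l2 : list term).

Fixpoint plug (C : ctx) (t : term) : term :=
  match C with
  | Hole => t
  | CAbs a C' => Abs a (plug C' t)
  | CFun f C' => Fun f (plug C' t)
  | CTup l1 C' l2 => Tup (l1 ++ plug C' t :: l2)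
  end.

Fixpoint var_occs (X : var) (B : list atom) (t : term)
  : list (list atom * perm) :=
  match t with
  | Atom _ => []
  | Susp p Y => if Nat.eqb X Y then [(B, p)] else []
  | Abs a s => var_occs X (a :: B) s
  | Fun _ s => var_occs X B s
  | Tup ts => flat_map (var_occs X B) ts
  end.

Fixpoint atom_occs (B : list atom) (t : term) : list (list atom * atom) :=
  match t with
  | Atom a => [(B, a)]
  | Susp _ _ => []
  | Abs a s => atom_occs (a :: B) s
  | Fun _ s => atom_occs B s
  | Tup ts => flat_map (atom_occs B) ts
  end.

Definition closed (D : fctx) (t : term) : Prop :=
  (forall B a, In (B, a) (atom_occs [] t) -> In a B) /\
  (forall X B1 p1 a,
      In (B1, p1) (var_occs X [] t) -> In (act p1 a) B1 ->
      forall B2 p2, In (B2, p2) (var_occs X [] t) ->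
        In (act p2 a) B2 \/ In (a, X) D) /\
  (forall X B1 p1 B2 p2 a,
      In (B1, p1) (var_occs X [] t) -> In (B2, p2) (var_occs X [] t) ->
      act p1 a <> act p2 a ->
      (~ In (act p1 a) B1 \/ ~ In (act p2 a) B2) ->
      In (a, X) D).

Record nrule : Type := NRule { nabla : fctx; lhs : term; rhs : term }.

Definition standard_rule (rho : nrule) : Prop :=
  (forall X, In X (vars (rhs rho)) -> In X (vars (lhs rho))) /\
  (forall a X, In (a, X) (nabla rho) -> In X (vars (lhs rho))) /\
  closed (nabla rho) (Tup [lhs rho; rhs rho]) /\
  (exists f s, lhs rho = Fun f s).

Definition perm_rule (p : perm) (rho : nrule) : nrule :=
  NRule (map (fun aX => (act p (fst aX), snd aX)) (nabla rho))
        (pact p (lhs rho)) (pact p (rhs rho)).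

Definition equivariant (R : nrule -> Prop) : Prop :=
  forall p rho, R rho -> R (perm_rule p rho).

Definition nom_step (R : nrule -> Prop) (s t : term) : Prop :=
  ground s = true /\ ground t = true /\
  exists rho p C s' (theta : var -> term),
    R rho /\
    s = plug C s' /\
    (forall a X, In (a, X) (nabla (perm_rule p rho)) -> fresh [] a (theta X)) /\
    aeq [] (tsub theta (lhs (perm_rule p rho))) s' /\
    aeq [] (plug C (tsub theta (rhs (perm_rule p rho)))) t.

Inductive mterm : Type :=
| MVar (a : atom)
| MMeta (Z : var) (args : list mterm)
| MAbs (a : atom) (t : mterm)
| MFun (f : fsym) (t : mterm)
| MTup (ts : list mterm).

Fixpoint is_term (t : mterm) : bool :=
  match t with
  | MVar _ => true
  | MMeta _ _ => false
  | MAbs _ s => is_term s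
  | MFun _ s => is_term s
  | MTup ts => forallb is_term ts
  end.

Fixpoint matoms (t : mterm) : list atom :=
  match t with
  | MVar a => [a]
  | MMeta _ ts => flat_map matoms ts
  | MAbs a s => a :: matoms s
  | MFun _ s => matoms s
  | MTup ts => flat_map matoms ts
  end.

Fixpoint metas (t : mterm) : list var :=
  match t with
  | MVar _ => []
  | MMeta Z ts => Z :: flat_map metas ts
  | MAbs _ s => metas s
  | MFun _ s => metas s
  | MTup ts => flat_map metas ts
  end.

Fixpoint meta_arities (t : mterm) : list (var * nat) :=
  match t with
  | MVar _ => []
  | MMeta Z ts => (Z, length ts) :: flat_map meta_arities ts
  | MAbs _ s => meta_arities s
  | MFun _ s => meta_arities s
  | MTup ts => flat_map meta_arities ts
  end.

Definition fresh_for (l : list atom) : atom := S (list_max l).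

Fixpoint msubst (rho : atom -> mterm) (t : mterm) : mterm :=
  match t with
  | MVar a => rho a
  | MMeta Z ts => MMeta Z (map (msubst rho) ts)
  | MAbs a s =>
      let b := fresh_for (matoms s ++ flat_map (fun x => matoms (rho x)) (matoms s)) in
      MAbs b (msubst (fun x => if Nat.eqb x a then MVar b else rho x) s)
  | MFun f s => MFun f (msubst rho s)
  | MTup ts => MTup (map (msubst rho) ts)
  end.

(* a substitute \lambda(a1,...,an).s *)
Definition substitute := (list atom * mterm)%type.
Definition valuation := var -> substitute.

Fixpoint bindp (ps : list atom) (us : list mterm) (x : atom) : mterm :=
  match ps, us with
  | p :: ps', u :: us' => if Nat.eqb x p then u else bindp ps' us' x
  | _, _ => MVar x
  end.

(* sigma(t) for a meta-term t, with bound variables renamed apart;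
   env records the renaming of bound variables *)
Fixpoint mapp (sigma : valuation) (env : atom -> mterm) (t : mterm) : mterm :=
  match t with
  | MVar a => env a
  | MMeta Z ts =>
      msubst (bindp (fst (sigma Z)) (map (mapp sigma env) ts)) (snd (sigma Z))
  | MAbs a s =>
      let b := fresh_for (matoms s
                          ++ flat_map (fun x => matoms (env x)) (matoms s)
                          ++ flat_map (fun Z => fst (sigma Z) ++ matoms (snd (sigma Z)))
                                      (metas s)) in
      MAbs b (mapp sigma (fun x => if Nat.eqb x a then MVar b else env x) s)
  | MFun f s => MFun f (mapp sigma env s)
  | MTup ts => MTup (map (mapp sigma env) ts)
  end.

Definition valuate (sigma : valuation) (t : mterm) : mterm := mapp sigma MVar t.

Fixpoint mfree (a : atom) (t : mterm) : bool :=
  match t with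
  | MVar b => Nat.eqb a b
  | MMeta _ ts => existsb (mfree a) ts
  | MAbs b s => negb (Nat.eqb a b) && mfree a s
  | MFun _ s => mfree a s
  | MTup ts => existsb (mfree a) ts
  end.

Fixpoint mswap (a b : atom) (t : mterm) : mterm :=
  match t with
  | MVar c => MVar (swap a b c)
  | MMeta Z ts => MMeta Z (map (mswap a b) ts)
  | MAbs c s => MAbs (swap a b c) (mswap a b s)
  | MFun f s => MFun f (mswap a b s)
  | MTup ts => MTup (map (mswap a b) ts)
  end.

Inductive maeq : mterm -> mterm -> Prop :=
| mae_var a : maeq (MVar a) (MVar a)
| mae_meta Z ss ts : Forall2 maeq ss ts -> maeq (MMeta Z ss) (MMeta Z ts)
| mae_abs_eq a s t : maeq s t -> maeq (MAbs a s) (MAbs a t)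
| mae_abs a b s t :
    a <> b -> mfree a t = false -> maeq s (mswap a b t) ->
    maeq (MAbs a s) (MAbs b t)
| mae_fun f s t : maeq s t -> maeq (MFun f s) (MFun f t)
| mae_tup ss ts : Forall2 maeq ss ts -> maeq (MTup ss) (MTup ts).

Inductive mctx : Type :=
| MHole
| MCAbs (a : atom) (C : mctx)
| MCFun (f : fsym) (C : mctx)
| MCTup (l1 : list mterm) (C : mctx) (l2 : list mterm).

Fixpoint mplug (C : mctx) (t : mterm) : mterm :=
  match C with
  | MHole => t
  | MCAbs a C' => MAbs a (mplug C' t)
  | MCFun f C' => MFun f (mplug C' t)
  | MCTup l1 C' l2 => MTup (l1 ++ mplug C' t :: l2)
  end.

Definition valuation_ok (sigma : valuation) (l r : mterm) : Prop :=
  (forall Z, is_term (snd (sigma Z)) = true /\ NoDup (fst (sigma Z))) /\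
  (forall Z n, In (Z, n) (meta_arities l ++ meta_arities r) ->
               n = length (fst (sigma Z))).

Definition crs_step (R' : mterm * mterm -> Prop) (s t : mterm) : Prop :=
  is_term s = true /\ is_term t = true /\
  exists l r C sigma,
    R' (l, r) /\ valuation_ok sigma l r /\
    maeq s (mplug C (valuate sigma l)) /\
    maeq t (mplug C (valuate sigma r)).

Definition terminating {A : Type} (step : A -> A -> Prop) : Prop :=
  ~ exists f : nat -> A, forall n, step (f n) (f (S n)).

Definition Lambda (t : term) (X : var) : list atom :=
  flat_map fst (var_occs X [] t).

Definition in_fctx (D : fctx) (a : atom) (X : var) : bool :=
  existsb (fun bY => Nat.eqb (fst bY) a && Nat.eqb (snd bY) X) D.

(* ascending list of {pi^-1(a) | a in Lam} \ {a | a#X in D} *)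
Definition xs (D : fctx) (Lam : list atom) (p : perm) (X : var) : list atom :=
  filter (fun b => existsb (Nat.eqb (act p b)) Lam && negb (in_fctx D b X))
         (seq 0 (S (list_max (map (act (perm_inv p)) Lam)))).

Fixpoint Tr (Lam : var -> list atom) (D : fctx) (t : term) : mterm :=
  match t with
  | Atom a => MVar a
  | Susp p X => MMeta X (map (fun b => MVar (act p b)) (xs D (Lam X) p X))
  | Abs a s => MAbs a (Tr Lam D s)
  | Fun f s => MFun f (Tr Lam D s)
  | Tup ts => MTup (map (Tr Lam D) ts)
  end.

Definition T (D : fctx) (t : term) : mterm := Tr (Lambda t) D t.

Definition crs_of (R : nrule -> Prop) (lr : mterm * mterm) : Prop :=
  exists rho, R rho /\ lr = (T (nabla rho) (lhs rho), T (nabla rho) (rhs rho)).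

(* Main.v *)
Require Import Defs.
From Stdlib Require Import List Arith Bool Lia.
Import ListNotations.

Fixpoint mterm_ind' (P : mterm -> Prop)
  (Hv : forall a, P (MVar a))
  (Hm : forall Z ts, Forall P ts -> P (MMeta Z ts))
  (Ha : forall a s, P s -> P (MAbs a s))
  (Hf : forall f s, P s -> P (MFun f s))
  (Ht : forall ts, Forall P ts -> P (MTup ts)) (t : mterm) : P t :=
  match t with
  | MVar a => Hv a
  | MMeta Z ts => Hm Z ts ((fix F l := match l return Forall P l with
        | [] => Forall_nil _ | x :: l' => Forall_cons x (mterm_ind' P Hv Hm Ha Hf Ht x) (F l') end) ts)
  | MAbs a s => Ha a s (mterm_ind' P Hv Hm Ha Hf Ht s)
  | MFun f s => Hf f s (mterm_ind' P Hv Hm Ha Hf Ht s)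
  | MTup ts => Ht ts ((fix F l := match l return Forall P l with
        | [] => Forall_nil _ | x :: l' => Forall_cons x (mterm_ind' P Hv Hm Ha Hf Ht x) (F l') end) ts)
  end.

Fixpoint term_ind' (P : term -> Prop)
  (Hat : forall a, P (Atom a))
  (Hs : forall p X, P (Susp p X))
  (Ha : forall a s, P s -> P (Abs a s))
  (Hf : forall f s, P s -> P (Fun f s))
  (Ht : forall ts, Forall P ts -> P (Tup ts)) (t : term) : P t :=
  match t with
  | Atom a => Hat a
  | Susp p X => Hs p X
  | Abs a s => Ha a s (term_ind' P Hat Hs Ha Hf Ht s)
  | Fun f s => Hf f s (term_ind' P Hat Hs Ha Hf Ht s)
  | Tup ts => Ht ts ((fix F l := match l return Forall P l with
        | [] => Forall_nil _ | x :: l' => Forall_cons x (term_ind' P Hat Hs Ha Hf Ht x) (F l') end) ts)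
  end.

Ltac eqbs := repeat match goal with |- context[Nat.eqb ?x ?y] => destruct (Nat.eqb_spec x y) end.

Lemma swap_invol a b c : swap a b (swap a b c) = c.
Proof. unfold swap. destruct (Nat.eqb_spec c a); destruct (Nat.eqb_spec c b); subst;
  eqbs; subst; try lia; try reflexivity. Qed.

Lemma act_app p q c : act (p ++ q) c = act p (act q c).
Proof. unfold act. now rewrite fold_right_app. Qed.

Lemma act_inv p c : act (perm_inv p) (act p c) = c.
Proof.
  unfold perm_inv. induction p as [|x p IH]; simpl; auto.
  rewrite act_app. simpl. rewrite swap_invol. exact IH.
Qed.

Lemma act_inj p x y : act p x = act p y -> x = y.
Proof. intro H. rewrite <- (act_inv p x), <- (act_inv p y), H. reflexivity. Qed.

Lemma swap_inj a b x y : swap a b x = swap a b y -> x = y.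
Proof. intro H. rewrite <- (swap_invol a b x), <- (swap_invol a b y), H. reflexivity. Qed.

Definition fresh_for_spec l x : In x l -> x <> fresh_for l.
Proof.
  unfold fresh_for. intros H. assert (x <= list_max l).
  { pose proof (proj1 (list_max_le l (list_max l)) (le_n _)) as F.
    rewrite Forall_forall in F. auto. }
  lia.
Qed.

Fixpoint emb (t : term) : mterm :=
  match t with
  | Atom a => MVar a
  | Susp _ _ => MTup []
  | Abs a s => MAbs a (emb s)
  | Fun f s => MFun f (emb s)
  | Tup ts => MTup (map emb ts)
  end.

Fixpoint embC (C : ctx) : mctx :=
  match C with
  | Hole => MHole
  | CAbs a C' => MCAbs a (embC C')
  | CFun f C' => MCFun f (embC C')
  | CTup l1 C' l2 => MCTup (map emb l1) (embC C') (map emb l2)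
  end.

Fixpoint mren (phi : atom -> atom) (t : mterm) : mterm :=
  match t with
  | MVar a => MVar (phi a)
  | MMeta Z ts => MMeta Z (map (mren phi) ts)
  | MAbs a s => MAbs (phi a) (mren phi s)
  | MFun f s => MFun f (mren phi s)
  | MTup ts => MTup (map (mren phi) ts)
  end.

Lemma mswap_mren a b t : mswap a b t = mren (swap a b) t.
Proof.
  induction t using mterm_ind'; simpl; f_equal; auto;
  apply map_ext_in; intros; rewrite Forall_forall in H; auto.
Qed.

Lemma emb_pact p t : emb (pact p t) = mren (act p) (emb t).
Proof.
  induction t using term_ind'; simpl; f_equal; auto.
  rewrite !map_map. apply map_ext_in; intros; rewrite Forall_forall in H; auto.
Qed.

Lemma emb_plug C x : emb (plug C x) = mplug (embC C) (emb x).
Proof.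
  induction C; simpl; f_equal; auto. rewrite map_app. simpl. now rewrite IHC.
Qed.

Lemma is_term_emb t : is_term (emb t) = true.
Proof.
  induction t using term_ind'; simpl; auto.
  apply forallb_forall. intros x Hx. apply in_map_iff in Hx as (y & <- & Hy).
  rewrite Forall_forall in H; auto.
Qed.

Lemma mfree_matoms x t : mfree x t = true -> In x (matoms t).
Proof.
  induction t using mterm_ind'; simpl; intros Hf.
  - apply Nat.eqb_eq in Hf; auto.
  - apply existsb_exists in Hf as (u & Hu & Hf'). rewrite Forall_forall in H.
    apply in_flat_map. eauto.
  - apply andb_prop in Hf as [_ Hf]. right. auto.
  - auto.
  - apply existsb_exists in Hf as (u & Hu & Hf'). rewrite Forall_forall in H.
    apply in_flat_map. eauto.
Qed.

Lemma matoms_mren phi x t : In x (matoms t) -> In (phi x) (matoms (mren phi t)).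
Proof.
  induction t using mterm_ind'; simpl; intros Hx.
  - destruct Hx as [<-|[]]; auto.
  - apply in_flat_map in Hx as (u & Hu & Hx). rewrite Forall_forall in H.
    apply in_flat_map. exists (mren phi u). split; auto. apply in_map; auto.
  - destruct Hx as [<-|Hx]; auto.
  - auto.
  - apply in_flat_map in Hx as (u & Hu & Hx). rewrite Forall_forall in H.
    apply in_flat_map. exists (mren phi u). split; auto. apply in_map; auto.
Qed.

Lemma fresh_mfree a t : fresh [] a t -> mfree a (emb t) = false.
Proof.
  induction t using term_ind'; intros Hf; inversion Hf; subst; simpl.
  - apply Nat.eqb_neq; auto.
  - destruct H0.
  - now rewrite Nat.eqb_refl.
  - rewrite IHt; auto. apply andb_false_r.
  - auto.
  - apply Bool.not_true_iff_false. intro E. apply existsb_exists in E as (u & Hu & E).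
    apply in_map_iff in Hu as (v & <- & Hv). rewrite Forall_forall in H, H1.
    rewrite H in E; auto. discriminate.
Qed.
Inductive dterm : Type :=
| DL (l : nat) | DF (a : atom) | DMeta (Z : var) (ds : list dterm)
| DAbs (d : dterm) | DFun (f : fsym) (d : dterm) | DTup (ds : list dterm).

Fixpoint lookup (E : list (atom * nat)) (x : atom) : option nat :=
  match E with
  | [] => None
  | (a, l) :: E' => if Nat.eqb x a then Some l else lookup E' x
  end.

Definition dvar (E : list (atom * nat)) (h : atom -> dterm) (x : atom) : dterm :=
  match lookup E x with Some l => DL l | None => h x end.

Fixpoint dbg (n : nat) (E : list (atom * nat)) (h : atom -> dterm) (t : mterm) : dterm :=
  match t with
  | MVar x => dvar E h x
  | MMeta Z ts => DMeta Z (map (dbg n E h) ts)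
  | MAbs a s => DAbs (dbg (S n) ((a, n) :: E) h s)
  | MFun f s => DFun f (dbg n E h s)
  | MTup ts => DTup (map (dbg n E h) ts)
  end.

Lemma dvar_eq a n E h : dvar ((a, n) :: E) h a = DL n.
Proof. unfold dvar; simpl. now rewrite Nat.eqb_refl. Qed.

Lemma dvar_neq a x n E h : x <> a -> dvar ((a, n) :: E) h x = dvar E h x.
Proof. intro H. unfold dvar; simpl. apply Nat.eqb_neq in H. now rewrite H. Qed.

Lemma existsb_in {A} (f : A -> bool) l x : In x l -> f x = true -> existsb f l = true.
Proof. intros. apply existsb_exists. eauto. Qed.

Lemma rename_db phi (Hinj : forall x y, phi x = phi y -> x = y) :
  forall w n E1 E2 h1 h2,
  (forall y, mfree y w = true -> dvar E1 h1 (phi y) = dvar E2 h2 y) ->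
  dbg n E1 h1 (mren phi w) = dbg n E2 h2 w.
Proof.
  induction w using mterm_ind'; intros n E1 E2 h1 h2 Hc; simpl.
  - apply Hc. simpl. apply Nat.eqb_refl.
  - f_equal. rewrite map_map. apply map_ext_in. intros u Hu.
    rewrite Forall_forall in H. apply H; auto. intros y Hy. apply Hc. simpl.
    eapply existsb_in; eauto.
  - f_equal. apply IHw. intros y Hy. destruct (Nat.eq_dec y a).
    + subst. now rewrite !dvar_eq.
    + rewrite dvar_neq by (intro E; apply n0; apply Hinj; auto).
      rewrite dvar_neq by auto. apply Hc. simpl.
      apply Nat.eqb_neq in n0. now rewrite n0, Hy.
  - f_equal. auto.
  - f_equal. rewrite map_map. apply map_ext_in. intros u Hu.
    rewrite Forall_forall in H. apply H; auto. intros y Hy. apply Hc. simpl.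
    eapply existsb_in; eauto.
Qed.

Lemma msubst_db : forall w n E1 E2 h1 h2 rho,
  (forall y, mfree y w = true -> exists z, rho y = MVar z /\ dvar E1 h1 y = dvar E2 h2 z) ->
  dbg n E1 h1 w = dbg n E2 h2 (msubst rho w).
Proof.
  induction w using mterm_ind'; intros n E1 E2 h1 h2 rho Hc; simpl.
  - destruct (Hc a) as (z & Hz & Hd). simpl; apply Nat.eqb_refl.
    rewrite Hz. simpl. auto.
  - f_equal. rewrite map_map. apply map_ext_in. intros u Hu.
    rewrite Forall_forall in H. apply H; auto. intros y Hy. apply Hc. simpl.
    eapply existsb_in; eauto.
  - f_equal. apply IHw. intros y Hy. destruct (Nat.eq_dec y a).
    + subst. rewrite Nat.eqb_refl. eexists; split; eauto. now rewrite !dvar_eq.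
    + assert (Hy' : mfree y (MAbs a w) = true).
      { simpl. apply Nat.eqb_neq in n0. now rewrite n0, Hy. }
      destruct (Hc y Hy') as (z & Hz & Hd).
      apply Nat.eqb_neq in n0 as n1. rewrite n1. exists z. split; auto.
      rewrite dvar_neq by auto. rewrite dvar_neq; auto.
      apply fresh_for_spec.
      apply in_or_app; right. apply in_flat_map. exists y. split.
      * apply mfree_matoms; auto.
      * rewrite Hz. simpl; auto.
  - f_equal. auto.
  - f_equal. rewrite map_map. apply map_ext_in. intros u Hu.
    rewrite Forall_forall in H. apply H; auto. intros y Hy. apply Hc. simpl.
    eapply existsb_in; eauto.
Qed.

Lemma aeq_db : forall s t, aeq [] s t -> forall n E h, dbg n E h (emb s) = dbg n E h (emb t).
Proof.
  induction s using term_ind'; intros t Ha n E h; inversion Ha; subst; simpl; auto.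
  - f_equal. auto.
  - f_equal. rewrite (IHs _ H2). rewrite emb_pact.
    apply rename_db. apply act_inj.
    intros y Hy. simpl. destruct (Nat.eq_dec y b).
    + subst. unfold swap. rewrite Nat.eqb_refl. destruct (Nat.eqb_spec b a); [congruence|].
      now rewrite !dvar_eq.
    + destruct (Nat.eq_dec y a).
      * subst. apply fresh_mfree in H4. congruence.
      * unfold swap. apply Nat.eqb_neq in n0 as n2. apply Nat.eqb_neq in n1 as n3.
        rewrite n2, n3. rewrite !dvar_neq; auto.
  - f_equal. auto.
  - f_equal. rewrite !map_map. clear Ha. revert ts0 H1. induction H; intros ts0 H1;
    inversion H1; subst; simpl; auto. f_equal; auto.
Qed.
Fixpoint leaves (d : dterm) : list dterm :=
  match d with
  | DL _ | DF _ => [d]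
  | DMeta _ ds => flat_map leaves ds
  | DAbs d' => leaves d'
  | DFun _ d' => leaves d'
  | DTup ds => flat_map leaves ds
  end.

Lemma leaves_dvar E x : leaves (dvar E DF x) = [dvar E DF x].
Proof. unfold dvar. destruct (lookup E x); reflexivity. Qed.

Lemma leaf_free : forall w n E x, mfree x w = true -> In (dvar E DF x) (leaves (dbg n E DF w)).
Proof.
  induction w using mterm_ind'; intros n E x Hf; simpl in *.
  - apply Nat.eqb_eq in Hf; subst. rewrite leaves_dvar. simpl; auto.
  - apply existsb_exists in Hf as (u & Hu & Hf). rewrite Forall_forall in H.
    apply in_flat_map. exists (dbg n E DF u). split; [apply in_map; auto|]. auto.
  - apply andb_prop in Hf as [Ha Hf]. apply negb_true_iff, Nat.eqb_neq in Ha.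
    rewrite <- (dvar_neq a x n E DF Ha). auto.
  - auto.
  - apply existsb_exists in Hf as (u & Hu & Hf). rewrite Forall_forall in H.
    apply in_flat_map. exists (dbg n E DF u). split; [apply in_map; auto|]. auto.
Qed.

Lemma leaf_char : forall w n E d, In d (leaves (dbg n E DF w)) ->
  (exists x, mfree x w = true /\ d = dvar E DF x) \/ (exists l, d = DL l /\ n <= l).
Proof.
  induction w using mterm_ind'; intros n E d Hd; simpl in *.
  - rewrite leaves_dvar in Hd. destruct Hd as [<-|[]]. left. exists a.
    split; auto. apply Nat.eqb_refl.
  - apply in_flat_map in Hd as (e & He & Hd). apply in_map_iff in He as (u & <- & Hu).
    rewrite Forall_forall in H. destruct (H u Hu n E d Hd) as [(x & Hx & ->)|]; auto.
    left. exists x. split; auto. eapply existsb_in; eauto.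
  - destruct (IHw _ _ _ Hd) as [(x & Hx & ->)|(l & -> & Hl)].
    + destruct (Nat.eq_dec x a).
      * subst. rewrite dvar_eq. right. eauto.
      * left. exists x. rewrite dvar_neq by auto. split; auto.
        apply Nat.eqb_neq in n0. now rewrite n0, Hx.
    + right. exists l. split; auto. lia.
  - auto.
  - apply in_flat_map in Hd as (e & He & Hd). apply in_map_iff in He as (u & <- & Hu).
    rewrite Forall_forall in H. destruct (H u Hu n E d Hd) as [(x & Hx & ->)|]; auto.
    left. exists x. split; auto. eapply existsb_in; eauto.
Qed.

Fixpoint msize (t : mterm) : nat :=
  match t with
  | MVar _ => 1
  | MMeta _ ts => S (list_sum (map msize ts))
  | MAbs _ s => S (msize s)
  | MFun _ s => S (msize s)
  | MTup ts => S (list_sum (map msize ts))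
  end.

Lemma msize_in s ts : In s ts -> msize s < S (list_sum (map msize ts)).
Proof.
  induction ts; simpl; [intros []|]. intros [->|H]; [lia|]. specialize (IHts H). lia.
Qed.

Definition proper (n : nat) (E : list (atom * nat)) : Prop :=
  (forall x l, lookup E x = Some l -> l < n) /\
  (forall x y l, lookup E x = Some l -> lookup E y = Some l -> x = y).

Lemma proper_cons n E a : proper n E -> proper (S n) ((a, n) :: E).
Proof.
  intros [H1 H2]. split.
  - intros x l. simpl. destruct (Nat.eqb_spec x a); intros Hl.
    + injection Hl; lia.
    + apply H1 in Hl. lia.
  - intros x y l. simpl. destruct (Nat.eqb_spec x a); destruct (Nat.eqb_spec y a); intros Hx Hy;
      try congruence.
    + injection Hx as <-. apply H1 in Hy. lia.
    + injection Hy as <-. apply H1 in Hx. lia.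
    + eauto.
Qed.

Lemma dvar_inj n E x y : proper n E -> dvar E DF x = dvar E DF y -> x = y.
Proof.
  intros [_ H2]. unfold dvar. destruct (lookup E x) eqn:Ex; destruct (lookup E y) eqn:Ey;
  intros He; try discriminate; injection He; intros; subst; eauto.
Qed.

Lemma map_eq_Forall2 {A B C} (f : A -> C) (g : B -> C) l1 l2 :
  map f l1 = map g l2 -> Forall2 (fun x y => f x = g y) l1 l2.
Proof.
  revert l2; induction l1; destruct l2; simpl; intros H; try discriminate; constructor;
  injection H; auto.
Qed.

Lemma dvar_not_DMeta E x Z ds : dvar E DF x <> DMeta Z ds.
Proof. unfold dvar; destruct (lookup E x); discriminate. Qed.
Lemma dvar_not_DAbs E x d : dvar E DF x <> DAbs d.
Proof. unfold dvar; destruct (lookup E x); discriminate. Qed.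
Lemma dvar_not_DFun E x f d : dvar E DF x <> DFun f d.
Proof. unfold dvar; destruct (lookup E x); discriminate. Qed.
Lemma dvar_not_DTup E x ds : dvar E DF x <> DTup ds.
Proof. unfold dvar; destruct (lookup E x); discriminate. Qed.

Lemma db_maeq_k : forall k s, msize s <= k -> forall t n E, proper n E ->
  dbg n E DF s = dbg n E DF t -> maeq s t.
Proof.
  induction k; intros s Hs; [destruct s; simpl in Hs; lia|].
  intros t n E Hp Heq.
  destruct s as [x|Z ss|a s1|f s1|ss]; destruct t as [y|Z' ts|b t1|g t1|ts]; simpl in Heq;
    try (exfalso; eapply dvar_not_DMeta; eauto; fail);
    try (exfalso; eapply dvar_not_DAbs; eauto; fail);
    try (exfalso; eapply dvar_not_DFun; eauto; fail);
    try (exfalso; eapply dvar_not_DTup; eauto; fail);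
    try (exfalso; symmetry in Heq; eapply dvar_not_DMeta; eauto; fail);
    try (exfalso; symmetry in Heq; eapply dvar_not_DAbs; eauto; fail);
    try (exfalso; symmetry in Heq; eapply dvar_not_DFun; eauto; fail);
    try (exfalso; symmetry in Heq; eapply dvar_not_DTup; eauto; fail);
    try discriminate.
  - apply (dvar_inj n E) in Heq; auto. subst. constructor.
  - injection Heq as <- Hm. constructor. apply map_eq_Forall2 in Hm.
    simpl in Hs. induction Hm; constructor.
    + eapply IHk; eauto. pose proof (msize_in x (x :: l) (or_introl eq_refl)). lia.
    + apply IHHm. simpl in Hs |- *. lia.
  - injection Heq as Hb. simpl in Hs.
    destruct (Nat.eq_dec a b).
    + subst. constructor. eapply IHk; [lia| |eauto]. apply proper_cons; auto.
    + assert (Hfa : mfree a t1 = false).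
      { apply Bool.not_true_iff_false. intro Hf.
        apply (leaf_free t1 (S n) ((b, n) :: E)) in Hf.
        rewrite <- Hb in Hf. apply leaf_char in Hf as [(x & Hx & Hd)|(l & Hd & Hl)].
        - rewrite dvar_neq in Hd by auto. destruct (Nat.eq_dec x a).
          + subst. rewrite dvar_eq in Hd. unfold dvar in Hd.
            destruct (lookup E a) eqn:Ea; try discriminate. injection Hd as ->.
            apply (proj1 Hp) in Ea. lia.
          + rewrite dvar_neq in Hd by auto. apply (dvar_inj n E) in Hd; auto.
        - rewrite dvar_neq in Hd by auto. unfold dvar in Hd.
          destruct (lookup E a) eqn:Ea; try discriminate. injection Hd as ->.
          apply (proj1 Hp) in Ea. lia. }
      apply mae_abs; auto.
      apply (IHk s1 ltac:(lia) _ (S n) ((a, n) :: E)). apply proper_cons; auto.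
      rewrite Hb, mswap_mren. symmetry. apply rename_db; [apply swap_inj|].
      intros y Hy. destruct (Nat.eq_dec y b) as [Eyb|Nyb].
      * subst. unfold swap. rewrite Nat.eqb_refl. destruct (Nat.eqb_spec b a); [congruence|].
        now rewrite !dvar_eq.
      * destruct (Nat.eq_dec y a) as [Eya|Nya]; [subst; congruence|].
        unfold swap. apply Nat.eqb_neq in Nya as n2. apply Nat.eqb_neq in Nyb as n3.
        rewrite n2, n3. rewrite !dvar_neq; auto.
  - injection Heq as <- Hb. constructor. simpl in Hs. eapply IHk; [lia|eauto|eauto].
  - injection Heq as Hm. constructor. apply map_eq_Forall2 in Hm.
    simpl in Hs. induction Hm; constructor.
    + eapply IHk; eauto. pose proof (msize_in x (x :: l) (or_introl eq_refl)). lia.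
    + apply IHHm. simpl in Hs |- *. lia.
Qed.

Lemma db_maeq s t : (forall n E, dbg n E DF s = dbg n E DF t) -> maeq s t.
Proof.
  intros H. apply (db_maeq_k (msize s) s (le_n _) t 0 []); auto.
  split; simpl; intros; discriminate.
Qed.
Lemma bindp_in (f : atom -> atom) (g : atom -> mterm) (L : list atom) y (Hinj : forall x y, f x = f y -> x = y) :
  In y L -> bindp (map f L) (map g L) (f y) = g y.
Proof.
  induction L as [|x L IH]; simpl; [intros []|]. intros [->|H].
  - now rewrite Nat.eqb_refl.
  - destruct (Nat.eqb_spec (f y) (f x)) as [E|E]; try (apply Hinj in E; subst; auto); auto.
Qed.

Lemma bindp_notin (f : atom -> atom) (g : atom -> mterm) (L : list atom) y (Hinj : forall x y, f x = f y -> x = y) :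
  ~ In y L -> bindp (map f L) (map g L) (f y) = MVar (f y).
Proof.
  induction L as [|x L IH]; simpl; auto. intros H.
  destruct (Nat.eqb_spec (f y) (f x)) as [E|E]; auto. apply Hinj in E. subst. tauto.
Qed.

Lemma bindp_var ps us z : (forall u, In u us -> exists w, u = MVar w) ->
  exists w, bindp ps us z = MVar w.
Proof.
  revert us; induction ps as [|p ps IH]; intros us H; simpl; eauto.
  destruct us as [|u us]; eauto. simpl in H. destruct (z =? p); eauto.

Qed.

Definition Zatoms (sigma : valuation) (t : mterm) : list atom :=
  flat_map (fun Z => fst (sigma Z) ++ matoms (snd (sigma Z))) (metas t).

Lemma core (D : fctx) (top : term) (theta : var -> term) (sigma : valuation)
  (HM : forall X B p, In (B, p) (var_occs X [] top) ->
     exists p0 Sc, sigma X = (map (act p0) Sc, emb (pact p0 (theta X))) /\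
       xs D (Lambda top X) p X = Sc /\
       (forall y, mfree y (emb (theta X)) = true -> ~ In y Sc ->
          ~ In (act p y) B /\ act p0 y = act p y)) :
  forall u B E E' E0 env n,
  (forall X B' p, In (B', p) (var_occs X B u) -> In (B', p) (var_occs X [] top)) ->
  (forall x, In x (matoms (Tr (Lambda top) D u)) ->
     exists z, env x = MVar z /\ dvar E DF x = dvar E' DF z) ->
  (forall z, In z (Zatoms sigma (Tr (Lambda top) D u)) -> dvar E' DF z = dvar E0 DF z) ->
  (forall x, ~ In x B -> dvar E DF x = dvar E0 DF x) ->
  dbg n E DF (emb (tsub theta u)) = dbg n E' DF (mapp sigma env (Tr (Lambda top) D u)).
Proof.
  induction u using term_ind'; intros B E E' E0 env n Hocc Hi Hii Hiii.
  - simpl in *. destruct (Hi a) as (z & Hz & Hd); auto. now rewrite Hz.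
  -
    assert (Ho : In (B, p) (var_occs X [] top)).
    { apply Hocc. simpl. rewrite Nat.eqb_refl. simpl; auto. }
    destruct (HM X B p Ho) as (p0 & Sc & Hs & Hxs & Hy).
    unfold Zatoms in Hii. simpl in Hi, Hii |- *. rewrite Hxs in Hi, Hii |- *.
    rewrite Hs in Hii |- *. simpl.
    rewrite map_map. simpl.
    set (w := emb (theta X)).
    set (rho := bindp (map (act p0) Sc) (map (fun c => env (act p c)) Sc)).
    assert (Henv : forall c, In c Sc -> exists z, env (act p c) = MVar z /\
                     dvar E DF (act p c) = dvar E' DF z).
    { intros c Hc. apply Hi. apply in_flat_map. exists (MVar (act p c)).
      split; [apply in_map_iff; eauto|simpl; auto]. }
    assert (Hrho : forall y, exists z, rho y = MVar z).
    { intros y. apply bindp_var. intros u Hu. apply in_map_iff in Hu as (c & <- & Hc).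
      destruct (Henv c Hc) as (z & Hz & _). eauto. }
    set (h1 := fun y => match rho y with MVar z => dvar E' DF z | _ => DF y end).
    set (h2 := fun y => dvar E DF (act p y)).
    assert (L : dbg n E DF (emb (pact p (theta X))) = dbg n [] h2 w).
    { rewrite emb_pact. apply rename_db; [apply act_inj|]. intros; reflexivity. }
    assert (R1 : dbg n [] h1 (mren (act p0) w) = dbg n [] h2 w).
    { apply rename_db; [apply act_inj|]. intros y Hyf. unfold dvar at 1 2. simpl.
      unfold h1, h2, rho. destruct (in_dec Nat.eq_dec y Sc) as [Hin|Hn].
      - rewrite bindp_in; [|apply act_inj|auto].
        destruct (Henv y Hin) as (z & Hz & Hd). now rewrite Hz.
      - rewrite bindp_notin; [|apply act_inj|auto].
        destruct (Hy y Hyf Hn) as [HB Hp].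
        rewrite Hii; [rewrite Hiii by auto; now rewrite Hp|].
        apply in_or_app. left. apply in_or_app. right.
        rewrite emb_pact. apply matoms_mren. apply mfree_matoms. auto. }
    assert (R2 : dbg n [] h1 (mren (act p0) w) = dbg n E' DF (msubst rho (mren (act p0) w))).
    { apply msubst_db. intros y _. destruct (Hrho y) as (z & Hz). exists z. split; auto.
      unfold dvar at 1. simpl. unfold h1. now rewrite Hz. }
    rewrite L, <- R1, R2. rewrite emb_pact. reflexivity.
  - simpl in *. f_equal.
    set (b := fresh_for _).
    apply (IHu (a :: B) _ _ E0).
    + intros X B' p Hp. apply Hocc. simpl. auto.
    + intros x Hx. destruct (Nat.eq_dec x a).
      * subst. rewrite Nat.eqb_refl. exists b. split; auto. now rewrite !dvar_eq.
      * apply Nat.eqb_neq in n0 as n1. rewrite n1.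
        destruct (Hi x (or_intror Hx)) as (z & Hz & Hd). exists z. split; auto.
        rewrite dvar_neq by auto. rewrite dvar_neq; auto.
        apply fresh_for_spec. apply in_or_app. right. apply in_or_app. left.
        apply in_flat_map. exists x. rewrite Hz. simpl. auto.
    + intros z Hz. rewrite dvar_neq. apply Hii. auto.
      apply fresh_for_spec. apply in_or_app. right. apply in_or_app. right. exact Hz.
    + intros x Hx. rewrite dvar_neq. apply Hiii. simpl in Hx. tauto.
      intro; subst; apply Hx; simpl; auto.
  - simpl in *. f_equal. eapply IHu; eauto.
  - simpl in *. f_equal. rewrite !map_map. apply map_ext_in. intros u Hu.
    rewrite Forall_forall in H. apply (H u Hu B E E' E0 env n).
    + intros X B' p Hp. apply Hocc. apply in_flat_map. eauto.
    + intros x Hx. apply Hi. apply in_flat_map. exists (Tr (Lambda top) D u).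
      split; auto. apply in_map; auto.
    + intros z Hz. apply Hii. unfold Zatoms in *. simpl.
      apply in_flat_map in Hz as (Z & HZ & Hz). apply in_flat_map. exists Z. split; auto.
      apply in_flat_map. exists (Tr (Lambda top) D u). split; auto. apply in_map; auto.
    + auto.
Qed.
Lemma act_inv' p c : act p (act (perm_inv p) c) = c.
Proof.
  pose proof (act_inv (rev p) c) as H. unfold perm_inv in *. now rewrite rev_involutive in H.
Qed.

Lemma in_fctx_iff D a X : in_fctx D a X = true <-> In (a, X) D.
Proof.
  unfold in_fctx. rewrite existsb_exists. split.
  - intros ((b, Y) & Hin & H). apply andb_prop in H as [H1 H2].
    apply Nat.eqb_eq in H1, H2. simpl in *. now subst.
  - intros H. exists (a, X). split; auto. simpl. now rewrite !Nat.eqb_refl.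
Qed.

Lemma xs_In D Lam p X c : In c (xs D Lam p X) <-> In (act p c) Lam /\ ~ In (c, X) D.
Proof.
  unfold xs. rewrite filter_In, in_seq. split.
  - intros [_ H]. apply andb_prop in H as [H1 H2]. apply existsb_exists in H1 as (v & Hv & E).
    apply Nat.eqb_eq in E. subst. split; auto. intro F. apply in_fctx_iff in F.
    rewrite F in H2. discriminate.
  - intros [H1 H2]. split.
    + split; [lia|]. assert (c <= list_max (map (act (perm_inv p)) Lam)).
      { pose proof (proj1 (list_max_le (map (act (perm_inv p)) Lam) _) (le_n _)) as F.
        rewrite Forall_forall in F. apply F. apply in_map_iff. exists (act p c).
        split; auto. apply act_inv. }
      lia.
    + apply andb_true_intro. split.
      * apply existsb_exists. exists (act p c). split; auto. apply Nat.eqb_refl.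
      * apply negb_true_iff. apply Bool.not_true_iff_false. intro F.
        apply in_fctx_iff in F. auto.
Qed.

Lemma filter_seq_extend (P : nat -> bool) N K : (forall c, P c = true -> c < N) ->
  filter P (seq 0 (N + K)) = filter P (seq 0 N).
Proof.
  intros H. rewrite seq_app, filter_app. simpl.
  assert (filter P (seq N K) = []) as ->.
  { assert (G : forall l, (forall x, In x l -> P x = false) -> filter P l = []).
    { induction l; simpl; intros Hl; auto. rewrite Hl by auto. auto. }
    apply G. intros x Hx. apply in_seq in Hx. apply Bool.not_true_iff_false.
    intro F. apply H in F. lia. }
  now rewrite app_nil_r.
Qed.

Lemma xs_eq D Lam1 Lam2 p1 p2 X :
  (forall c, In (act p1 c) Lam1 /\ ~ In (c, X) D <-> In (act p2 c) Lam2 /\ ~ In (c, X) D) ->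
  xs D Lam1 p1 X = xs D Lam2 p2 X.
Proof.
  intros Hc. unfold xs.
  set (N := S (list_max (map (act (perm_inv p1)) Lam1))).
  set (M := S (list_max (map (act (perm_inv p2)) Lam2))).
  set (P := fun b => existsb (Nat.eqb (act p1 b)) Lam1 && negb (in_fctx D b X)).
  set (Q := fun b => existsb (Nat.eqb (act p2 b)) Lam2 && negb (in_fctx D b X)).
  assert (HPQ : forall c, P c = Q c).
  { intros c. apply Bool.eq_iff_eq_true.
    assert (G : forall Lam p, existsb (Nat.eqb (act p c)) Lam && negb (in_fctx D c X) = true
               <-> In (act p c) Lam /\ ~ In (c, X) D).
    { intros Lam p. rewrite andb_true_iff, existsb_exists, negb_true_iff.
      rewrite <- Bool.not_true_iff_false, in_fctx_iff. split.
      - intros [(v & Hv & E) F]. apply Nat.eqb_eq in E. subst. auto.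
      - intros [H1 H2]. split; auto. exists (act p c). split; auto. apply Nat.eqb_refl. }
    unfold P, Q. rewrite !G. apply Hc. }
  assert (HP : forall c, P c = true -> c < N).
  { intros c Hc'. assert (In c (xs D Lam1 p1 X)) as Hi.
    { unfold xs. apply filter_In. split; auto. apply in_seq.
      unfold P in Hc'. apply andb_prop in Hc' as [H1 _].
      apply existsb_exists in H1 as (v & Hv & E). apply Nat.eqb_eq in E. subst.
      split; [lia|]. unfold N.
      pose proof (proj1 (list_max_le (map (act (perm_inv p1)) Lam1) _) (le_n _)) as F.
      rewrite Forall_forall in F. enough (c <= list_max (map (act (perm_inv p1)) Lam1)) by lia.
      apply F. apply in_map_iff. exists (act p1 c). split; auto. apply act_inv. }
    unfold xs in Hi. apply filter_In in Hi as [Hi _]. apply in_seq in Hi. unfold N. lia. }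
  assert (HQ : forall c, Q c = true -> c < M).
  { intros c Hc'. assert (In c (xs D Lam2 p2 X)) as Hi.
    { unfold xs. apply filter_In. split; auto. apply in_seq.
      unfold Q in Hc'. apply andb_prop in Hc' as [H1 _].
      apply existsb_exists in H1 as (v & Hv & E). apply Nat.eqb_eq in E. subst.
      split; [lia|]. unfold M.
      pose proof (proj1 (list_max_le (map (act (perm_inv p2)) Lam2) _) (le_n _)) as F.
      rewrite Forall_forall in F. enough (c <= list_max (map (act (perm_inv p2)) Lam2)) by lia.
      apply F. apply in_map_iff. exists (act p2 c). split; auto. apply act_inv. }
    unfold xs in Hi. apply filter_In in Hi as [Hi _]. apply in_seq in Hi. unfold M. lia. }
  fold N M P Q.
  transitivity (filter P (seq 0 (N + M))); [symmetry; exact (filter_seq_extend P N M HP)|].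
  transitivity (filter Q (seq 0 (M + N))); [|exact (filter_seq_extend Q M N HQ)].
  rewrite Nat.add_comm. apply filter_ext. auto.
Qed.

Lemma occ_vars X B u o : In o (var_occs X B u) -> In X (vars u).
Proof.
  revert B. induction u using term_ind'; intros B H0; simpl in *; try tauto.
  - destruct (Nat.eqb_spec X X0); subst; simpl in *; tauto.
  - eauto.
  - eauto.
  - apply in_flat_map in H0 as (v & Hv & Ho). rewrite Forall_forall in H.
    apply in_flat_map. eauto.
Qed.

Lemma vars_occ X B u : In X (vars u) -> exists o, In o (var_occs X B u).
Proof.
  revert B. induction u using term_ind'; intros B H0; simpl in *; try tauto.
  - destruct H0 as [->|[]]. rewrite Nat.eqb_refl. eexists; simpl; eauto.
  - eauto.
  - eauto.
  - apply in_flat_map in H0 as (v & Hv & Ho). rewrite Forall_forall in H.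
    destruct (H v Hv B Ho) as (o & Ho'). exists o. apply in_flat_map. eauto.
Qed.
Definition mksig (D : fctx) (l : term) (theta : var -> term) : valuation := fun X =>
  let p0 := snd (hd ([], []) (var_occs X [] l)) in
  (map (act p0) (xs D (Lambda l X) p0 X), emb (pact p0 (theta X))).

Lemma char D T0 t X B p (Hcl : closed D T0)
  (Hsub : forall o, In o (var_occs X [] t) -> In o (var_occs X [] T0))
  (Hin : In (B, p) (var_occs X [] t)) c :
  In (act p c) (Lambda t X) /\ ~ In (c, X) D <-> In (act p c) B /\ ~ In (c, X) D.
Proof.
  destruct Hcl as (_ & H2 & H3). split.
  - intros [HL Hf]. split; auto. unfold Lambda in HL.
    apply in_flat_map in HL as ((B2, p2) & Ho2 & Hb2). simpl in Hb2.
    set (e := act (perm_inv p2) (act p c)).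
    assert (He : act p2 e = act p c) by apply act_inv'.
    destruct (Nat.eq_dec c e) as [Ec|Nc].
    + rewrite <- Ec in He. rewrite <- He in Hb2.
      destruct (H2 X B2 p2 c (Hsub _ Ho2) Hb2 B p (Hsub _ Hin)); tauto.
    + destruct (In_dec Nat.eq_dec (act p c) B) as [|Nb]; auto. exfalso. apply Hf.
      apply (H3 X B p B2 p2 c (Hsub _ Hin) (Hsub _ Ho2)); auto.
      intro E. rewrite <- He in E. apply act_inj in E. auto.
  - intros [Hb Hf]. split; auto. unfold Lambda. apply in_flat_map. exists (B, p). auto.
Qed.

Lemma HM_holds D l r theta top (Hcl : closed D (Tup [l; r]))
  (Hv : forall X, In X (vars r) -> In X (vars l))
  (Hfr : forall a X, In (a, X) D -> fresh [] a (theta X))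
  (Htop : top = l \/ top = r) :
  forall X B p, In (B, p) (var_occs X [] top) ->
     exists p0 Sc, mksig D l theta X = (map (act p0) Sc, emb (pact p0 (theta X))) /\
       xs D (Lambda top X) p X = Sc /\
       (forall y, mfree y (emb (theta X)) = true -> ~ In y Sc ->
          ~ In (act p y) B /\ act p0 y = act p y).
Proof.
  intros X B p Hin.
  assert (Hocc : var_occs X [] (Tup [l; r]) = var_occs X [] l ++ var_occs X [] r).
  { simpl. now rewrite app_nil_r. }
  assert (Hl : forall o, In o (var_occs X [] l) -> In o (var_occs X [] (Tup [l; r]))).
  { intros. rewrite Hocc. apply in_or_app; auto. }
  assert (Hr : forall o, In o (var_occs X [] r) -> In o (var_occs X [] (Tup [l; r]))).
  { intros. rewrite Hocc. apply in_or_app; auto. }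
  assert (Htops : forall o, In o (var_occs X [] top) -> In o (var_occs X [] (Tup [l; r]))).
  { destruct Htop; subst; auto. }
  assert (H0 : In (hd ([], []) (var_occs X [] l)) (var_occs X [] l)).
  { assert (Hx : In X (vars l)).
    { destruct Htop; subst.
      - eapply occ_vars; eauto.
      - apply Hv. eapply occ_vars; eauto. }
    destruct (vars_occ X [] l Hx) as (o & Ho).
    destruct (var_occs X [] l); [destruct Ho|]. simpl; auto. }
  unfold mksig. remember (hd ([], []) (var_occs X [] l)) as o0. destruct o0 as (B0, p0).
  simpl. exists p0, (xs D (Lambda l X) p0 X).
  assert (Hxs : xs D (Lambda top X) p X = xs D (Lambda l X) p0 X).
  { apply xs_eq. intros c.
    rewrite (char D _ top X B p Hcl Htops Hin c).
    rewrite (char D _ l X B0 p0 Hcl Hl H0 c).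
    destruct Hcl as (_ & H2 & _).
    split; intros [Hb Hf]; split; auto.
    - destruct (H2 X B p c (Htops _ Hin) Hb B0 p0 (Hl _ H0)); tauto.
    - destruct (H2 X B0 p0 c (Hl _ H0) Hb B p (Htops _ Hin)); tauto. }
  split; auto. split; auto.
  intros y Hy Hn.
  assert (Hf : ~ In (y, X) D).
  { intro F. apply Hfr in F. apply fresh_mfree in F. congruence. }
  assert (Hb : ~ In (act p y) B).
  { intro F. apply Hn. rewrite <- Hxs. apply xs_In.
    apply (char D _ top X B p Hcl Htops Hin y). auto. }
  split; auto.
  destruct (Nat.eq_dec (act p0 y) (act p y)) as [|Ne]; auto. exfalso. apply Hf.
  destruct Hcl as (_ & _ & H3).
  apply (H3 X B p B0 p0 y (Htops _ Hin) (Hl _ H0)); auto.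
Qed.
Lemma db_plug C : forall x y, (forall n E, dbg n E DF x = dbg n E DF y) ->
  forall n E, dbg n E DF (mplug C x) = dbg n E DF (mplug C y).
Proof.
  induction C; intros x y H n E; simpl; auto.
  - f_equal. auto.
  - f_equal. auto.
  - f_equal. rewrite !map_app. simpl. f_equal. f_equal. auto.
Qed.

Lemma arities_occ Lam D u : forall B Z k, In (Z, k) (meta_arities (Tr Lam D u)) ->
  exists B' p, In (B', p) (var_occs Z B u) /\ k = length (xs D (Lam Z) p Z).
Proof.
  induction u using term_ind'; intros B Z k Hk; simpl in *; try tauto.
  - destruct Hk as [Hk|Hk].
    + injection Hk as <- <-. exists B, p. rewrite Nat.eqb_refl. split; simpl; auto.
      now rewrite length_map.
    + exfalso. apply in_flat_map in Hk as (u & Hu & Hk). apply in_map_iff in Hu as (c & <- & _).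
      simpl in Hk. auto.
  - eauto.
  - eauto.
  - apply in_flat_map in Hk as (v & Hv & Hk). apply in_map_iff in Hv as (u & <- & Hu).
    rewrite Forall_forall in H. destruct (H u Hu B Z k Hk) as (B' & p & Ho & ->).
    exists B', p. split; auto. apply in_flat_map. eauto.
Qed.

Lemma NoDup_map_inj (f : nat -> nat) l : (forall x y, f x = f y -> x = y) -> NoDup l -> NoDup (map f l).
Proof.
  intros Hf Hl. induction Hl; simpl; constructor; auto.
  intro F. apply in_map_iff in F as (y & E & Hy). apply Hf in E. subst. auto.
Qed.

Theorem mainTheorem2 (R : nrule -> Prop) :
  (forall rho, R rho -> standard_rule rho) ->
  equivariant R ->
  terminating (crs_step (crs_of R)) ->
  terminating (nom_step R).
Proof.
  intros HR Heqv Hterm [f Hf]. apply Hterm. exists (fun n => emb (f n)). intros n.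
  destruct (Hf n) as (_ & _ & rho & p & C & s' & theta & HRr & Hs & Hfr & Hal & Har).
  set (rho' := perm_rule p rho) in *.
  assert (HR' : R rho') by (apply Heqv; auto).
  destruct (HR _ HR') as (Hv & _ & Hcl & _).
  set (D := nabla rho') in *. set (l := lhs rho') in *. set (r := rhs rho') in *.
  set (sigma := mksig D l theta).
  assert (HMl := HM_holds D l r theta l Hcl Hv Hfr (or_introl eq_refl)).
  assert (HMr := HM_holds D l r theta r Hcl Hv Hfr (or_intror eq_refl)).
  assert (Core : forall top, (top = l \/ top = r) ->
            forall n E, dbg n E DF (emb (tsub theta top)) = dbg n E DF (valuate sigma (T D top))).
  { intros top Ht n0 E. unfold valuate, T.
    apply (core D top theta sigma (HM_holds D l r theta top Hcl Hv Hfr Ht) top [] E E E MVar n0).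
    - auto.
    - intros x _. exists x. auto.
    - auto.
    - auto. }
  split; [apply is_term_emb|]. split; [apply is_term_emb|].
  exists (T D l), (T D r), (embC C), sigma.
  split; [exists rho'; split; auto|].
  split.
  - split.
    + intros Z. split; [apply is_term_emb|]. unfold sigma, mksig. simpl.
      apply NoDup_map_inj; [apply act_inj|]. unfold xs. apply NoDup_filter. apply seq_NoDup.
    + intros Z k Hk. apply in_app_or in Hk.
      assert (G : forall top, (top = l \/ top = r) -> In (Z, k) (meta_arities (T D top)) ->
                 k = length (fst (sigma Z))).
      { intros top Ht Hk'. unfold T in Hk'.
        destruct (arities_occ _ _ _ [] Z k Hk') as (B' & p' & Ho & ->).
        destruct (HM_holds D l r theta top Hcl Hv Hfr Ht Z B' p' Ho) as (p0 & Sc & Hsig & Hxs & _).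
        unfold sigma. rewrite Hsig, Hxs. simpl. now rewrite length_map. }
      destruct Hk; [apply (G l)|apply (G r)]; auto.
  - split.
    + rewrite Hs, emb_plug. apply db_maeq. apply db_plug. intros n0 E.
      rewrite <- (aeq_db _ _ Hal). apply Core; auto.
    + apply db_maeq. intros n0 E. symmetry.
      rewrite <- (aeq_db _ _ Har), emb_plug. apply db_plug. intros n1 E1.
      symmetry. apply Core; auto.
Qed.
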